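(* Let $A$ be a finite-dimensional vector space and define the bilinear form $\mathcal{B}$ on $A\oplus A^*$ by $\mathcal{B}(x+a^*,y+b^* )=\langle y,a^*\rangle-\langle x,b^*\rangle$. (a) If $(A,\bullet,\{\cdot,\cdot\})$ is a Poisson algebra, then $A\oplus A^*$ with $(x+a^* )\circ(y+b^* )=x\bullet y-L_\bullet^*(x)b^*$ and $[x+a^*,y+b^*]=\{x,y\}+\mathrm{ad}^*(x)b^*$, together with $\mathcal{B}$, is a quadratic dual pre-Poisson algebra. (b) If $(A,\circ,[\cdot,\cdot])$ is a dual pre-Poisson algebra, then $A\oplus A^*$ with $(x+a^* )\circ(y+b^* )=x\circ y-L_\circ^*(x)b^*+(-L_\circ^*+R_\circ^* )(y)a^*$ and $[x+a^*,y+b^*]=[x,y]+L_{[\cdot,\cdot]}^*(x)b^*-(L_{[\cdot,\cdot]}^*+R_{[\cdot,\cdot]}^* )(y)a^*$, together with $\mathcal{B}$, is a quadratic dual pre-Poisson algebra.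
   Context: Field $\mathbb{F}$ of characteristic $0$. $L_\diamond(x)y=x\diamond y$, $R_\diamond(x)y=y\diamond x$, $\mathrm{ad}(x)y=\{x,y\}$; for $f:A\to\mathrm{End}(V)$, $\langle f^*(x)v^*,u\rangle=-\langle v^*,f(x)u\rangle$. A Poisson algebra: $(A,\bullet)$ commutative associative, $(A,\{\cdot,\cdot\})$ Lie, $\{x,y\bullet z\}=\{x,y\}\bullet z+y\bullet\{x,z\}$. A dual pre-Poisson algebra: $x\circ(y\circ z)=(x\circ y)\circ z=(y\circ x)\circ z$; $[x,[y,z]]=[[x,y],z]+[y,[x,z]]$; $[x,y\circ z]=[x,y]\circ z+y\circ[x,z]$; $[x\circ y,z]=x\circ[y,z]+y\circ[x,z]$; $[x,y]\circ z=-[y,x]\circ z$. A quadratic dual pre-Poisson algebra is a dual pre-Poisson algebra with a nondegenerate skew-symmetric bilinear form $\mathcal{B}$ that is invariant: $\mathcal{B}(x\circ y,z)=\mathcal{B}(x,y\circ z-z\circ y)$ and $\mathcal{B}([x,y],z)=\mathcal{B}(x,[y,z]+[z,y])$ for all $x,y,z$. *)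

(* Defs.v *)
From HB Require Import structures.
From mathcomp Require Import all_boot all_order all_algebra.
Set Implicit Arguments. Unset Strict Implicit. Unset Printing Implicit Defensive.
Import GRing.Theory.
Local Open Scope ring_scope.

Definition bilinear_op (F : fieldType) (V : lmodType F) (op : V -> V -> V) :=
  (forall (a : F) (x y z : V), op (a *: x + y) z = a *: op x z + op y z) /\
  (forall (a : F) (x y z : V), op z (a *: x + y) = a *: op z x + op z y).

Definition bilinear_form (F : fieldType) (V : lmodType F) (B : V -> V -> F) :=
  (forall (a : F) (x y z : V), B (a *: x + y) z = a * B x z + B y z) /\
  (forall (a : F) (x y z : V), B z (a *: x + y) = a * B z x + B z y).

Definition is_poisson (F : fieldType) (V : lmodType F) (mul br : V -> V -> V) :=
  (bilinear_op mul /\ bilinear_op br /\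
      (forall x y z, mul x (mul y z) = mul (mul x y) z) /\
      (forall x y, mul x y = mul y x) /\
      (forall x y, br x y = - br y x) /\
      (forall x y z, br x (br y z) + br y (br z x) + br z (br x y) = 0)
    /\ (forall x y z, br x (mul y z) = mul (br x y) z + mul y (br x z))).

Definition is_dual_pre_poisson (F : fieldType) (V : lmodType F)
    (circ br : V -> V -> V) :=
  (bilinear_op circ /\ bilinear_op br /\
      (forall x y z, circ x (circ y z) = circ (circ x y) z /\
                     circ (circ x y) z = circ (circ y x) z) /\
      (forall x y z, br x (br y z) = br (br x y) z + br y (br x z)) /\
      (forall x y z, br x (circ y z) = circ (br x y) z + circ y (br x z)) /\
      (forall x y z, br (circ x y) z = circ x (br y z) + circ y (br x z))
    /\ (forall x y z, circ (br x y) z = - circ (br y x) z)).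

Definition is_quadratic_dpp (F : fieldType) (V : lmodType F)
    (circ br : V -> V -> V) (B : V -> V -> F) :=
  (is_dual_pre_poisson circ br /\ bilinear_form B /\
      (forall x y, B x y = - B y x) /\
      (forall x, (forall y, B x y = 0) -> x = 0) /\
      (forall x y z, B (circ x y) z = B x (circ y z - circ z y))
    /\ (forall x y z, B (br x y) z = B x (br y z + br z y))).

Notation dualsp F A := ('Hom(A, F^o)) (only parsing).

(* Dual map: < f^*(x) a, u > = - < a, f(x) u >. *)
Definition dualop (F : fieldType) (A : vectType F) (f : A -> A)
    (a : dualsp F A) : dualsp F A :=
  linfun (fun u : A => - a (f u)).

Definition Bform (F : fieldType) (A : vectType F)
    (p q : (A * dualsp F A)%type) : F :=
  p.2 q.1 - q.2 p.1.

Definition circ_a (F : fieldType) (A : vectType F) (mul br : A -> A -> A)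
    (p q : (A * dualsp F A)%type) : (A * dualsp F A)%type :=
  (mul p.1 q.1, - dualop (mul p.1) q.2).
Definition br_a (F : fieldType) (A : vectType F) (mul br : A -> A -> A)
    (p q : (A * dualsp F A)%type) : (A * dualsp F A)%type :=
  (br p.1 q.1, dualop (br p.1) q.2).

Definition circ_b (F : fieldType) (A : vectType F) (circ br : A -> A -> A)
    (p q : (A * dualsp F A)%type) : (A * dualsp F A)%type :=
  (circ p.1 q.1,
   - dualop (circ p.1) q.2
   + (- dualop (circ q.1) p.2 + dualop (fun u => circ u q.1) p.2)).
Definition br_b (F : fieldType) (A : vectType F) (circ br : A -> A -> A)
    (p q : (A * dualsp F A)%type) : (A * dualsp F A)%type :=
  (br p.1 q.1,
   dualop (br p.1) q.2
   - (dualop (br q.1) p.2 + dualop (fun u => br u q.1) p.2)).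

(* Main.v *)
Require Import Defs.
From HB Require Import structures.
From mathcomp Require Import all_boot all_order all_algebra.
From mathcomp Require Import ring.
Set Implicit Arguments. Unset Strict Implicit.
Import GRing.Theory.
Local Open Scope ring_scope.

Lemma dualopE (F : fieldType) (A : vectType F) (f : A -> A)
  (Hf : forall k u v, f (k*:u+v) = k*: f u + f v) (a : 'Hom(A, F^o)) u :
  dualop f a u = - a (f u).
Proof.
pose g := fun u : A => (- a (f u) : F^o).
have lg : linear g.
  by move=> k x y; rewrite /g Hf linearP opprD -scalerN.
pose G : {linear A -> F^o} := HB.pack g (GRing.isLinear.Build F A F^o *:%R g lg).
exact: (lfunE G).
Qed.

Lemma dual_sep (F : fieldType) (A : vectType F) (x : A) :
  (forall b : 'Hom(A, F^o), b x = 0) -> x = 0.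
Proof.
move=> H; rewrite (coord_vbasis (memvf x)) big1 // => i _.
have := H (linfun (coord (vbasis fullv) i : A -> F^o)).
by rewrite lfunE /= => ->; rewrite scale0r.
Qed.

Lemma scaleoE (F : fieldType) k (x : F^o) : k *: x = k * x. Proof. by []. Qed.

Lemma Bform_bil (F : fieldType) (A : vectType F) : bilinear_form (@Bform F A).
Proof.
split=> k [x a] [y b] [z c]; rewrite /Bform /=.
  by rewrite add_lfunE scale_lfunE linearP /= !scaleoE; ring.
by rewrite add_lfunE scale_lfunE linearP /= !scaleoE; ring.
Qed.

Lemma Bform_skew (F : fieldType) (A : vectType F) p q : @Bform F A p q = - Bform q p.
Proof. by rewrite /Bform opprB. Qed.

Lemma Bform_nondeg (F : fieldType) (A : vectType F) p :
  (forall q, @Bform F A p q = 0) -> p = 0.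
Proof.
case: p => x a H.
have ha : a = 0.
  apply/lfunP => u; have := H (u, 0); rewrite /Bform /= zero_lfunE subr0 => ->.
  by rewrite zero_lfunE.
have hx : x = 0.
  apply: dual_sep => b; have := H (0, b); rewrite /Bform /= ha zero_lfunE sub0r.
  by move/eqP; rewrite oppr_eq0 => /eqP.
by rewrite ha hx.
Qed.
Section Bil.
Variables (F : fieldType) (V : lmodType F) (op : V -> V -> V).
Hypothesis H : bilinear_op op.
Lemma bilDl x y z : op (x + y) z = op x z + op y z.
Proof. by have := H.1 1 x y z; rewrite !scale1r. Qed.
Lemma bilDr x y z : op z (x + y) = op z x + op z y.
Proof. by have := H.2 1 x y z; rewrite !scale1r. Qed.
Lemma bil0l z : op 0 z = 0.
Proof. by apply: (@addrI _ (op 0 z)); rewrite -bilDl !addr0. Qed.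
Lemma bil0r z : op z 0 = 0.
Proof. by apply: (@addrI _ (op z 0)); rewrite -bilDr !addr0. Qed.
Lemma bilZl k x z : op (k *: x) z = k *: op x z.
Proof. by have := H.1 k x 0 z; rewrite !addr0 bil0l addr0. Qed.
Lemma bilZr k x z : op z (k *: x) = k *: op z x.
Proof. by have := H.2 k x 0 z; rewrite !addr0 bil0r addr0. Qed.
Lemma bilNl x z : op (- x) z = - op x z.
Proof. by rewrite -scaleN1r bilZl scaleN1r. Qed.
Lemma bilNr x z : op z (- x) = - op z x.
Proof. by rewrite -scaleN1r bilZr scaleN1r. Qed.
Lemma bilBl x y z : op (x - y) z = op x z - op y z.
Proof. by rewrite bilDl bilNl. Qed.
Lemma bilBr x y z : op z (x - y) = op z x - op z y.
Proof. by rewrite bilDr bilNr. Qed.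
Lemma bil_linl z k u v : op (k *: u + v) z = k *: op u z + op v z.
Proof. exact: H.1. Qed.
Lemma bil_linr z k u v : op z (k *: u + v) = k *: op z u + op z v.
Proof. exact: H.2. Qed.
End Bil.

Lemma eqF (F : fieldType) (x y : F) : x = y -> (x : F^o) = y. Proof. by []. Qed.

Lemma hD (F : fieldType) (A : vectType F) (a : 'Hom(A, F^o)) u v : a (u + v) = a u + a v.
Proof. exact: linearD. Qed.
Lemma hN (F : fieldType) (A : vectType F) (a : 'Hom(A, F^o)) u : a (- u) = - a u.
Proof. exact: linearN. Qed.
Lemma hZ (F : fieldType) (A : vectType F) (a : 'Hom(A, F^o)) k u : a (k *: u) = k * a u.
Proof. exact: linearZ. Qed.

Lemma pair_ext (F : fieldType) (A : vectType F) (p q : (A * 'Hom(A, F^o))%type) :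
  p.1 = q.1 -> (forall u, p.2 u = q.2 u) -> p = q.
Proof. case: p => x a; case: q => y b /= Hxy H; rewrite Hxy; congr pair; exact/lfunP. Qed.

Section PartA.
Variables (F : fieldType) (A : vectType F) (mul br : A -> A -> A).
Hypothesis HP : is_poisson mul br.
Let HPd := HP.
Let mulB : bilinear_op mul. Proof. move: HP; rewrite /is_poisson; tauto. Qed.
Let brB : bilinear_op br. Proof. move: HP; rewrite /is_poisson; tauto. Qed.
Let massoc : forall x y z, mul x (mul y z) = mul (mul x y) z. Proof. move: HP; rewrite /is_poisson; tauto. Qed.
Let mcomm : forall x y, mul x y = mul y x. Proof. move: HP; rewrite /is_poisson; tauto. Qed.
Let banti : forall x y, br x y = - br y x. Proof. move: HP; rewrite /is_poisson; tauto. Qed.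
Let bjac : forall x y z, br x (br y z) + br y (br z x) + br z (br x y) = 0. Proof. move: HP; rewrite /is_poisson; tauto. Qed.
Let bleib : forall x y z, br x (mul y z) = mul (br x y) z + mul y (br x z). Proof. move: HP; rewrite /is_poisson; tauto. Qed.

Let dmulE x (a : 'Hom(A, F^o)) u : dualop (mul x) a u = - a (mul x u).
Proof. exact: (dualopE (bil_linr mulB x)). Qed.
Let dbrE x (a : 'Hom(A, F^o)) u : dualop (br x) a u = - a (br x u).
Proof. exact: (dualopE (bil_linr brB x)). Qed.

Ltac simpA := rewrite /circ_a /br_a /Bform /=; try (apply: pair_ext => [|u] /=);
  rewrite ?(add_lfunE, opp_lfunE, scale_lfunE, zero_lfunE, dmulE, dbrE)
    ?(bil_linl mulB, bil_linr mulB, bil_linl brB, bil_linr brB, bilDl mulB, bilDr mulB, bilDl brB, bilDr brB,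
      bilNl mulB, bilNr mulB, bilNl brB, bilNr brB, bilZl mulB, bilZr mulB, bilZl brB, bilZr brB)
    ?(hD, hN, hZ) /= ?opprK ?scaleoE; try (by apply: eqF; ring); try done.

Let jac' x y z : br x (br y z) = br (br x y) z + br y (br x z).
Proof.
have h := bjac x y z.
rewrite (banti z (br x y)) (banti z x) (bilNr brB) in h.
apply/eqP; rewrite -subr_eq0 -h; apply/eqP.
by rewrite opprD addrA addrAC.
Qed.
Let l2' x y z : br (mul x y) z = mul x (br y z) + mul y (br x z).
Proof.
by rewrite banti bleib (banti z x) (banti z y) (bilNl mulB) (bilNr mulB) opprD !opprK (mcomm (br x z) y) addrC.
Qed.

Lemma A_bilc : bilinear_op (circ_a mul br).
Proof. by split=> k [x a] [y b] [z c]; simpA. Qed.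
Lemma A_bilb : bilinear_op (br_a mul br).
Proof. by split=> k [x a] [y b] [z c]; simpA. Qed.
Lemma A_assoc : forall p q r, circ_a mul br p (circ_a mul br q r) = circ_a mul br (circ_a mul br p q) r /\
    circ_a mul br (circ_a mul br p q) r = circ_a mul br (circ_a mul br q p) r.
Proof. move=> [x a] [y b] [z c]; split; simpA; rewrite ?massoc ?(mcomm y x) //. Qed.
Lemma A_jac : forall p q r, br_a mul br p (br_a mul br q r) = br_a mul br (br_a mul br p q) r + br_a mul br q (br_a mul br p r).
Proof. move=> [x a] [y b] [z c]; simpA; try exact: jac'. by rewrite (jac' x y u) hD; apply: eqF; ring. Qed.
Lemma A_l1 : forall p q r, br_a mul br p (circ_a mul br q r) = circ_a mul br (br_a mul br p q) r + circ_a mul br q (br_a mul br p r).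
Proof. move=> [x a] [y b] [z c]; simpA; try exact: bleib. by rewrite bleib hD;  apply: eqF; ring. Qed.
Lemma A_l2 : forall p q r, br_a mul br (circ_a mul br p q) r = circ_a mul br p (br_a mul br q r) + circ_a mul br q (br_a mul br p r).
Proof. move=> [x a] [y b] [z c]; simpA; try exact: l2'.
by rewrite l2' (bleib y x u) (bleib x y u) (banti y x) (bilNl mulB) !hD hN;  apply: eqF; ring. Qed.
Lemma A_anti : forall p q r, circ_a mul br (br_a mul br p q) r = - circ_a mul br (br_a mul br q p) r.
Proof. move=> [x a] [y b] [z c]; simpA; rewrite (banti y x) (bilNl mulB) ?hN ?opprK //. Qed.
Lemma A_inv1 : forall p q r, Bform (circ_a mul br p q) r = Bform p (circ_a mul br q r - circ_a mul br r q).
Proof. move=> [x a] [y b] [z c]; simpA. by rewrite (mcomm z y) (mcomm y x) (mcomm z x);  apply: eqF; ring. Qed.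
Lemma A_inv2 : forall p q r, Bform (br_a mul br p q) r = Bform p (br_a mul br q r + br_a mul br r q).
Proof. move=> [x a] [y b] [z c]; simpA. by rewrite (banti z y) (banti y x) (banti z x) !hN;  apply: eqF; ring. Qed.

Lemma partA : is_quadratic_dpp (circ_a mul br) (br_a mul br) (@Bform F A).
Proof.
split; [|split; [exact: Bform_bil | split; [exact: Bform_skew | split; [exact: Bform_nondeg | split; [exact: A_inv1 | exact: A_inv2]]]]].
split; [exact: A_bilc|split;[exact: A_bilb|split;[exact: A_assoc|split;[exact: A_jac|split;[exact: A_l1|split;[exact: A_l2|exact: A_anti]]]]]].
Qed.
End PartA.

Section PartB.
Variables (F : fieldType) (A : vectType F) (circ br : A -> A -> A).
Hypothesis HP : is_dual_pre_poisson circ br.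
Let cB : bilinear_op circ. Proof. move: HP; rewrite /is_dual_pre_poisson; tauto. Qed.
Let bB : bilinear_op br. Proof. move: HP; rewrite /is_dual_pre_poisson; tauto. Qed.
Let cassoc : forall x y z, circ x (circ y z) = circ (circ x y) z /\ circ (circ x y) z = circ (circ y x) z.
Proof. move: HP; rewrite /is_dual_pre_poisson; tauto. Qed.
Let bjac : forall x y z, br x (br y z) = br (br x y) z + br y (br x z).
Proof. move: HP; rewrite /is_dual_pre_poisson; tauto. Qed.
Let bl1 : forall x y z, br x (circ y z) = circ (br x y) z + circ y (br x z).
Proof. move: HP; rewrite /is_dual_pre_poisson; tauto. Qed.
Let bl2 : forall x y z, br (circ x y) z = circ x (br y z) + circ y (br x z).
Proof. move: HP; rewrite /is_dual_pre_poisson; tauto. Qed.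
Let banti : forall x y z, circ (br x y) z = - circ (br y x) z.
Proof. move: HP; rewrite /is_dual_pre_poisson; tauto. Qed.
Let ca x y z : circ x (circ y z) = circ (circ x y) z. Proof. exact: (cassoc x y z).1. Qed.
Let cc x y z : circ (circ x y) z = circ (circ y x) z. Proof. exact: (cassoc x y z).2. Qed.
Let bS x y z : br (br x y) z = - br (br y x) z.
Proof.
have h1 := bjac x y z; have h2 := bjac y x z.
have e : br x (br y z) + (br (br x y) z + br (br y x) z) = br x (br y z) + 0.
  by rewrite addr0 {2}h1 h2 addrA addrC [RHS]addrC -addrA.
by move/addrI/eqP: e; rewrite addr_eq0 => /eqP.
Qed.

Let dcE x (a : 'Hom(A, F^o)) u : dualop (circ x) a u = - a (circ x u).
Proof. exact: (dualopE (bil_linr cB x)). Qed.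
Let dcrE y (a : 'Hom(A, F^o)) u : dualop (fun v => circ v y) a u = - a (circ u y).
Proof. exact: (dualopE (bil_linl cB y)). Qed.
Let dbE x (a : 'Hom(A, F^o)) u : dualop (br x) a u = - a (br x u).
Proof. exact: (dualopE (bil_linr bB x)). Qed.
Let dbrE y (a : 'Hom(A, F^o)) u : dualop (fun v => br v y) a u = - a (br u y).
Proof. exact: (dualopE (bil_linl bB y)). Qed.

Ltac simpB := rewrite /circ_b /br_b /Bform /=; try (apply: pair_ext => [|u] /=);
  rewrite ?(add_lfunE, opp_lfunE, scale_lfunE, zero_lfunE, dcE, dcrE, dbE, dbrE)
    ?(bil_linl cB, bil_linr cB, bil_linl bB, bil_linr bB, bilDl cB, bilDr cB, bilDl bB, bilDr bB,
      bilNl cB, bilNr cB, bilNl bB, bilNr bB, bilZl cB, bilZr cB, bilZl bB, bilZr bB)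
    ?(hD, hN, hZ) /= ?opprK ?scaleoE; try (by apply: eqF; ring); try done.

Lemma B_bilc : bilinear_op (circ_b circ br).
Proof. by split=> k [x a] [y b] [z c]; simpB. Qed.
Lemma B_bilb : bilinear_op (br_b circ br).
Proof. by split=> k [x a] [y b] [z c]; simpB. Qed.
Lemma B_assoc : forall p q r, circ_b circ br p (circ_b circ br q r) = circ_b circ br (circ_b circ br p q) r /\
    circ_b circ br (circ_b circ br p q) r = circ_b circ br (circ_b circ br q p) r.
Proof. move=> [x a] [y b] [z c]; split; simpB.
  by rewrite !ca (cc y x) (cc z x) (cc u y) !(cc z u); apply: eqF; ring.
by rewrite !ca (cc y x) !(cc z u); apply: eqF; ring.
Qed.
Lemma B_jac : forall p q r, br_b circ br p (br_b circ br q r) = br_b circ br (br_b circ br p q) r + br_b circ br q (br_b circ br p r).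
Proof. move=> [x a] [y b] [z c]; simpB.
by rewrite (bjac x y u) (bjac x z u) (bjac x u z) (bjac y z u) (bjac y u z) (bS z u y); rewrite ?(hD, hN); apply: eqF; ring.
Qed.
Lemma B_l1 : forall p q r, br_b circ br p (circ_b circ br q r) = circ_b circ br (br_b circ br p q) r + circ_b circ br q (br_b circ br p r).
Proof. move=> [x a] [y b] [z c]; simpB.
rewrite (bl1 x y u) (bl1 x z u) (bl1 x u z) (bl2 y z u) (bl1 u y z) (bl1 y z u) (bl2 z u y) (bl1 y u z).
by rewrite (bl2 u z y) (bl1 z y u) (bl2 y u z) (banti z y u) (banti u y z); rewrite ?(hD, hN); apply: eqF; ring.
Qed.
Lemma B_l2 : forall p q r, br_b circ br (circ_b circ br p q) r = circ_b circ br p (br_b circ br q r) + circ_b circ br q (br_b circ br p r).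
Proof. move=> [x a] [y b] [z c]; simpB.
rewrite (bl2 x y u) (bl1 y x u) (bl1 x y u) (banti y x u) (bl1 z x u) (bl2 x u z) (banti z x u).
by rewrite (bl1 z y u) (bl2 y u z) (banti z y u) (banti u z y); rewrite ?(hD, hN); apply: eqF; ring.
Qed.
Lemma B_anti : forall p q r, circ_b circ br (br_b circ br p q) r = - circ_b circ br (br_b circ br q p) r.
Proof. move=> [x a] [y b] [z c]; simpB.
by rewrite (banti x y u) (bl2 z u x) (bl2 u z x) (bl2 z u y) (bl2 u z y); rewrite ?(hD, hN); apply: eqF; ring.
Qed.
Lemma B_inv1 : forall p q r, Bform (circ_b circ br p q) r = Bform p (circ_b circ br q r - circ_b circ br r q).
Proof. by move=> [x a] [y b] [z c]; simpB. Qed.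
Lemma B_inv2 : forall p q r, Bform (br_b circ br p q) r = Bform p (br_b circ br q r + br_b circ br r q).
Proof. by move=> [x a] [y b] [z c]; simpB. Qed.

Lemma partB : is_quadratic_dpp (circ_b circ br) (br_b circ br) (@Bform F A).
Proof.
split; [|split; [exact: Bform_bil | split; [exact: Bform_skew | split; [exact: Bform_nondeg | split; [exact: B_inv1 | exact: B_inv2]]]]].
split; [exact: B_bilc|split;[exact: B_bilb|split;[exact: B_assoc|split;[exact: B_jac|split;[exact: B_l1|split;[exact: B_l2|exact: B_anti]]]]]].
Qed.
End PartB.

Unset Implicit Arguments.

Theorem proposition2p34 (F : fieldType) (A : vectType F) :
  [pchar F] =i pred0 ->
  (forall mul br : A -> A -> A, is_poisson mul br ->
     is_quadratic_dpp (circ_a mul br) (br_a mul br) (@Bform F A)) /\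
  (forall circ br : A -> A -> A, is_dual_pre_poisson circ br ->
     is_quadratic_dpp (circ_b circ br) (br_b circ br) (@Bform F A)).
Proof.
move=> _; split=> [mul br HP | circ br HP]; [exact: partA | exact: partB].
Qed.
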